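(* Let $N\ge1$ clients; for each client $i$ let $x^i\in\mathbb{R}^d$ be a random feature vector with $\mathbb{E}[x^ix^{i\top}]=H$ (the same for all $i$), let $\varepsilon^i$ be a real random variable independent of $x^i$ with $\mathbb{E}[\varepsilon^i]=0$, $\mathbb{E}[(\varepsilon^i)^2]=\sigma^2$, and let $w_*^1,\dots,w_*^N\in\mathbb{R}^d$ with $w_*=\frac1N\sum_iw_*^i$. Assume there is $\kappa>0$ such that for all $i$ and all $z\in\mathbb{R}^d$, $\mathbb{E}[\langle z,x^i\rangle^4]\le\kappa\langle z,Hz\rangle^2$. Let $\Theta_i=\mathbb{E}[g_*^i(g_*^i)^\top]$ with $g_*^i=(x^ix^{i\top})(w_*-w_*^i)+x^i\varepsilon^i$, and let $W_*$ be uniform on $\{w_*^i:i\in\{1,\dots,N\}\}$, so $\mathrm{Cov}(W_* )=\frac1N\sum_i(w_*-w_*^i)(w_*-w_*^i)^\top$. Then $$\frac1N\sum_{i=1}^N\Theta_i\preccurlyeq\big(\kappa\,\mathrm{Tr}(H\,\mathrm{Cov}(W_* ))+\sigma^2\big)H.$$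
   Context: $A\preccurlyeq B$ means $B-A$ is positive semi-definite. *)

(* Defs.v *)
From HB Require Import structures.
From mathcomp Require Import all_boot all_order all_algebra.
From mathcomp Require Import all_classical all_reals all_analysis.
Set Implicit Arguments. Unset Strict Implicit. Unset Printing Implicit Defensive.
Import Order.TTheory GRing.Theory Num.Theory.
Local Open Scope classical_set_scope.
Local Open Scope ring_scope.

Definition psd (R : realType) (d : nat) (M : 'M[R]_d) : Prop :=
  M^T = M /\ forall z : 'cV[R]_d, 0 <= (z^T *m M *m z) 0 0.

Definition loewner_le (R : realType) (d : nat) (A B : 'M[R]_d) : Prop :=
  psd (B - A).

(* Entrywise expectation of a random matrix (the entries are real numbers;
   'fine' is only used to return to R, integrability is ensured by the
   hypotheses of the theorem). *)
Definition Emx (dT : measure_display) (T : measurableType dT) (R : realType)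
  (P : probability T R) (m n : nat) (M : T -> 'M[R]_(m, n)) : 'M[R]_(m, n) :=
  \matrix_(j, k) fine ('E_P[fun t => M t j k])%E.

(* Independence of a random vector x (with values in R^d) and a real random
   variable e: the events {x in A_1 x ... x A_d} and {e in B} are independent
   for all Borel sets A_j, B (measurable rectangles generate the product
   sigma-algebra and form a pi-system, so this is independence of
   sigma(x) and sigma(e)). *)
Definition indep_vec_rv (dT : measure_display) (T : measurableType dT)
  (R : realType) (P : probability T R) (d : nat)
  (x : T -> 'cV[R]_d) (e : T -> R) : Prop :=
  forall (A : 'I_d -> set R) (B : set R),
    (forall j, measurable (A j)) -> measurable B ->
    P ([set t | forall j, A j (x t j ord0)] `&` (e @^-1` B)) =
    (P [set t | forall j, A j (x t j ord0)] * P (e @^-1` B))%E.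

Definition wmean (R : realType) (N d : nat) (ws : 'I_N -> 'cV[R]_d) : 'cV[R]_d :=
  N%:R^-1 *: \sum_(i < N) ws i.

Definition CovW (R : realType) (N d : nat) (ws : 'I_N -> 'cV[R]_d) : 'M[R]_d :=
  N%:R^-1 *: \sum_(i < N) ((wmean ws - ws i) *m (wmean ws - ws i)^T).

Definition gstar (R : realType) (N d : nat) (ws : 'I_N -> 'cV[R]_d) (i : 'I_N)
  (xi : 'cV[R]_d) (ei : R) : 'cV[R]_d :=
  (xi *m xi^T) *m (wmean ws - ws i) + ei *: xi.

Definition Theta (dT : measure_display) (T : measurableType dT) (R : realType)
  (P : probability T R) (N d : nat) (ws : 'I_N -> 'cV[R]_d)
  (x : 'I_N -> T -> 'cV[R]_d) (eps : 'I_N -> T -> R) (i : 'I_N) : 'M[R]_d :=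
  Emx P (fun t => gstar ws i (x i t) (eps i t) *m (gstar ws i (x i t) (eps i t))^T).

(* Main.v *)
Require Import Defs.
From HB Require Import structures.
From mathcomp Require Import all_boot all_order all_algebra.
From mathcomp Require Import all_classical all_reals all_analysis.
From mathcomp Require Import ring lra measurable_realfun.
Import Order.TTheory GRing.Theory Num.Theory.
Local Open Scope classical_set_scope.
Local Open Scope ring_scope.
Set Implicit Arguments. Unset Strict Implicit. Unset Printing Implicit Defensive.
Section Indep.
Context d (T : measurableType d) (R : realType) (P : probability T R) (n : nat)
  (x : T -> 'cV[R]_n) (e : T -> R).
Hypothesis mx : forall j, measurable_fun setT (fun t => x t j ord0).
Hypothesis me : measurable_fun setT e.
Hypothesis ind : indep_vec_rv P x e.

Definition rectG : set (set T) := [set S | exists A : 'I_n -> set R,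
  (forall j, measurable (A j)) /\ S = [set t | forall j, A j (x t j ord0)]].
Local Notation Tx := (g_sigma_algebraType rectG).

Lemma rectG_meas : rectG `<=` measurable.
Proof.
move=> _ [A [mA ->]].
have -> : [set t | forall j, A j (x t j ord0)] = \bigcap_(j in setT) ((fun t => x t j ord0) @^-1` A j).
  by apply/seteqP; split => t /= h j; [move=> _|]; apply: h.
apply: fin_bigcap_measurable; first exact: finite_finset.
by move=> j _; rewrite -[X in measurable X]setTI; apply: mx.
Qed.

Lemma sub_meas : <<s rectG >> `<=` measurable.
Proof. apply: smallest_sub; [exact: sigma_algebra_measurable | exact: rectG_meas]. Qed.

Lemma mid : measurable_fun setT (fun t : T => (t : Tx)).
Proof. move=> _ A mA; rewrite setTI; exact: sub_meas. Qed.

Lemma mxj' j : measurable_fun (setT : set Tx) (fun t => x t j ord0).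
Proof.
move=> _ B mB; rewrite setTI; apply: sub_sigma_algebra.
exists (fun k => if k == j then B else setT); split.
  by move=> k; case: ifP.
apply/seteqP; split => t /=.
  by move=> h k; case: ifP => // /eqP ->.
by move=> /(_ j); rewrite eqxx.
Qed.

Lemma dyn (B : set R) : measurable B -> forall S, <<s rectG >> S ->
  P (S `&` e @^-1` B) = (P S * P (e @^-1` B))%E.
Proof.
move=> mB.
have mE : measurable (e @^-1` B) by rewrite -[X in measurable X]setTI; apply: me.
apply: (@dynkin_induction _ Tx rectG (fun S : set Tx => P (S `&` e @^-1` B) = (P S * P (e @^-1` B))%E)) => //.
- by move=> S T1 [A1 [mA1 ->]] [A2 [mA2 ->]]; exists (fun j => A1 j `&` A2 j); split;
    [move=> j; exact: measurableI | apply/seteqP; split => t /=; [move=> [h1 h2] j; split|move=> h; split => j; case: (h j)]].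
- by rewrite setTI probability_setT mul1e.
- by move=> _ [A [mA ->]]; apply: ind.
- move=> S mS PS.
  have mS' : measurable (S : set T) by exact: sub_meas.
  have h1 : P (e @^-1` B) = (P (S `&` e @^-1` B) + P (~` S `&` e @^-1` B))%E.
    rewrite -measureU; [|exact: measurableI|apply: measurableI => //; exact: measurableC|].
      by rewrite -setIUl setUv setTI.
    by rewrite setIACA setICr set0I.
  have h2 : P (~` S) = (1 - P S)%E.
    exact: probability_setC.
  rewrite h2; move: h1; rewrite PS.
  have mSE : d.-measurable (~` S `&` e @^-1` B) by apply: measurableI => //; apply: (@measurableC _ T _ mS').
  rewrite -(fineK (fin_num_measure P _ mS')) -(fineK (fin_num_measure P _ mE)) -(fineK (fin_num_measure P _ mSE)).
  move: (fine (P S)) (fine (P (e @^-1` B))) (fine (P (~` S `&` e @^-1` B))) => a b c.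
  rewrite -EFinM -EFinD => -[h]; rewrite (_ : (1 - a%:E)%E = (1 - a)%:E) // -EFinM; congr EFin; lra.
- move=> F mF tF PF.
  rewrite setI_bigcupl !measure_bigcup //.
  + have [r Er] : exists r : R, P (e @^-1` B) = r%:E.
      by exists (fine (P (e @^-1` B))); rewrite fineK // fin_num_measure.
    rewrite Er muleC -nneseriesZl //; apply: eq_eseriesr => k _; by rewrite muleC; have := PF k; rewrite Er.
  + by move=> k _; apply: (sub_meas (mF k)).
  + by move=> k _; apply: measurableI => //; apply: (sub_meas (mF k)).
  + apply/trivIsetP => i j _ _ ij; rewrite setIACA setIid.
    by move/trivIsetP: tF => /(_ i j I I ij) ->; rewrite set0I.
Qed.

Let mid_mix := isMeasurableFun.Build _ _ _ _ _ mid.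
Let idM : {mfun T >-> Tx} := HB.pack (fun t : T => (t : Tx)) mid_mix.
Let me_mix := isMeasurableFun.Build _ _ _ _ _ me.
Let eM : {mfun T >-> R} := HB.pack e me_mix.
Lemma mpair : measurable_fun setT (fun t : T => ((t : Tx), e t)).
Proof. exact: measurable_fun_pair mid me. Qed.
Let mpair_mix := isMeasurableFun.Build _ _ _ _ _ mpair.
Let pM : {mfun T >-> (Tx * R)%type} := HB.pack (fun t : T => ((t : Tx), e t)) mpair_mix.

Let m1 := distribution P idM.
Let m2 := distribution P eM.
Let m' := distribution P pM.

Lemma prodE X : measurable X -> (m1 \x m2)%E X = m' X.
Proof.
apply: product_measure_unique => A B mA mB.
rewrite /m' /m1 /m2 /distribution /pushforward /=.
change (P (A `&` e @^-1` B) = (P A * P (e @^-1` B))%E).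
exact: dyn.
Qed.

Lemma indep_ge0 (F : T -> R) (G : R -> R) :
  measurable_fun (setT : set Tx) F -> measurable_fun setT G ->
  (forall t, 0 <= F t) -> (forall s, 0 <= G s) ->
  (\int[P]_t (F t * G (e t))%:E = \int[P]_t (F t)%:E * \int[P]_t (G (e t))%:E)%E.
Proof.
move=> mF mG F0 G0.
pose f (p : (Tx * R)%type) := (F p.1 * G p.2)%:E.
have mf : measurable_fun setT f.
  apply/measurable_EFinP; apply: measurable_funM.
    exact: (measurableT_comp mF measurable_fst).
  exact: (measurableT_comp mG measurable_snd).
have f0 p : (0 <= f p)%E by rewrite lee_fin mulr_ge0.
have E1 : (\int[P]_t (F t * G (e t))%:E = \int[m']_p f p)%E.
  rewrite /m' /distribution ge0_integral_pushforward //.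
have E2 : (\int[m']_p f p = \int[(m1 \x m2)%E]_p f p)%E.
  by apply: eq_measure_integral => A mA _; exact: (esym (prodE mA)).
rewrite E1 E2 fubini_tonelli1 //.
have mG' : measurable_fun setT (fun y : R => (G y)%:E) by exact/measurable_EFinP.
have mF' : measurable_fun (setT : set Tx) (fun y => (F y)%:E) by exact/measurable_EFinP.
have inner (t : Tx) : (\int[m2]_y f (t, y) = (F t)%:E * \int[m2]_y (G y)%:E)%E.
  rewrite -ge0_integralZl ?lee_fin //; last by move=> y _; rewrite lee_fin.
rewrite /fubini_F; under eq_integral => t _ do rewrite inner.
rewrite ge0_integralZr //; last first.
  by apply: integral_ge0 => y _; rewrite lee_fin.
  by move=> t _; rewrite lee_fin.
congr (_ * _)%E.
  have h := ge0_integral_pushforward mid P measurableT mF' (fun y _ => F0 y).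
  by rewrite preimage_setT in h; exact: h.
have h := ge0_integral_pushforward me P measurableT mG' (fun y _ => G0 y).
by rewrite preimage_setT in h; exact: h.
Qed.
End Indep.

Section Tools.
Context d (T : measurableType d) (R : realType) (P : probability T R).
Local Notation Int f := (P.-integrable setT (EFin \o f)).

Lemma int_le (f g : T -> R) : measurable_fun setT f -> (forall t, `|f t| <= g t) -> Int g -> Int f.
Proof.
move=> mf fg ig; apply: (le_integrable measurableT _ _ ig); first exact/measurable_EFinP.
by move=> t _; rewrite /= lee_fin (le_trans (fg t)) // ler_norm.
Qed.

Lemma int_ge0 (f : T -> R) : measurable_fun setT f -> (forall t, 0 <= f t) ->
  (\int[P]_t (f t)%:E < +oo)%E -> Int f.
Proof.
move=> mf f0 fi; apply/integrableP; split; first exact/measurable_EFinP.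
by under eq_integral => t _ do rewrite /= ger0_norm //.
Qed.

Lemma int_cst (c : R) : Int (fun _ => c).
Proof. exact: (finite_measure_integrable_cst P c measurableT). Qed.

Lemma intD (f g : T -> R) : Int f -> Int g -> Int (fun t => f t + g t).
Proof. move=> hf hg; exact: (integrableD measurableT hf hg). Qed.

Lemma intZ (c : R) (f : T -> R) : Int f -> Int (fun t => c * f t).
Proof. move=> hf; exact: (integrableZl measurableT c hf). Qed.

Lemma intN (f : T -> R) : Int f -> Int (fun t => - f t).
Proof. move=> hf; exact: (integrableN hf). Qed.

Lemma intB (f g : T -> R) : Int f -> Int g -> Int (fun t => f t - g t).
Proof. by move=> hf hg; apply: intD => //; exact: intN. Qed.

Lemma int_sum (I : Type) (s : seq I) (F : I -> T -> R) : (forall i, Int (F i)) ->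
  Int (fun t => \sum_(i <- s) F i t).
Proof.
move=> hF; elim: s => [|a s IH].
  by under eq_fun do rewrite big_nil; exact: int_cst.
under eq_fun do rewrite big_cons; exact: intD.
Qed.

Lemma RE_sum (I : Type) (s : seq I) (F : I -> T -> R) : (forall i, Int (F i)) ->
  \int[P]_t (\sum_(i <- s) F i t) = \sum_(i <- s) \int[P]_t (F i t).
Proof.
move=> hF; elim: s => [|a s IH].
  by under eq_Rintegral do rewrite big_nil; rewrite big_nil /Rintegral integral0.
under eq_Rintegral do rewrite big_cons; rewrite big_cons RintegralD // ?IH //.
exact: int_sum.
Qed.

Lemma int_norm (f : T -> R) : Int f -> Int (fun t => `|f t|).
Proof. exact: integrable_norm. Qed.

Lemma int_meas (f : T -> R) : Int f -> measurable_fun setT f.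
Proof. by move=> /integrableP[/measurable_EFinP]. Qed.
End Tools.
Section Lin.
Context d (T : measurableType d) (R : realType) (P : probability T R).
Local Notation Int f := (P.-integrable setT (EFin \o f)).
Lemma RE_sum2 (n : nat) (F : 'I_n -> 'I_n -> T -> R) (c : 'I_n -> 'I_n -> R) :
  (forall j k, Int (F j k)) ->
  \int[P]_t (\sum_j \sum_k c j k * F j k t) = \sum_j \sum_k c j k * \int[P]_t F j k t.
Proof.
move=> iF.
rewrite (@RE_sum _ _ _ P _ _ (fun j t => \sum_k c j k * F j k t)); last first.
  by move=> j; apply: int_sum => k; exact: intZ.
apply: eq_bigr => j _.
rewrite (@RE_sum _ _ _ P _ _ (fun k t => c j k * F j k t)); last by move=> k; exact: intZ.
by apply: eq_bigr => k _; rewrite RintegralZl.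
Qed.
End Lin.

Lemma qf (R : comRingType) (n : nat) (z : 'cV[R]_n) (M : 'M[R]_n) :
  (z^T *m M *m z) ord0 ord0 = \sum_j \sum_k z j ord0 * z k ord0 * M j k.
Proof.
rewrite mxE; under eq_bigr do rewrite mxE big_distrl /=.
rewrite exchange_big /=; apply: eq_bigr => j _; apply: eq_bigr => k _.
by rewrite !mxE; ring.
Qed.

Section Indep2.
Context d (T : measurableType d) (R : realType) (P : probability T R) (n : nat)
  (x : T -> 'cV[R]_n) (e : T -> R).
Hypothesis mx : forall j, measurable_fun setT (fun t => x t j ord0).
Hypothesis me : measurable_fun setT e.
Hypothesis ind : indep_vec_rv P x e.
Local Notation Tx := (g_sigma_algebraType (rectG x)).
Local Notation Int f := (P.-integrable setT (EFin \o f)).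

Lemma mTx (F : T -> R) : measurable_fun [set: Tx] F -> measurable_fun setT F.
Proof. move=> mF; exact: (measurableT_comp mF (mid mx)). Qed.

Lemma indep_ge0R (F : T -> R) (G : R -> R) :
  measurable_fun [set: Tx] F -> measurable_fun setT G ->
  (forall t, 0 <= F t) -> (forall s, 0 <= G s) -> Int F -> Int (fun t => G (e t)) ->
  Int (fun t => F t * G (e t)) /\
  \int[P]_t (F t * G (e t)) = \int[P]_t (F t) * \int[P]_t (G (e t)).
Proof.
move=> mF mG F0 G0 iF iG.
have h := indep_ge0 mx me ind mF mG F0 G0.
have f1 := integrable_fin_num measurableT iF.
have f2 := integrable_fin_num measurableT iG.
split.
  apply: int_ge0.
  - apply: measurable_funM; first exact: mTx.
    exact: (measurableT_comp mG me).
  - by move=> t; rewrite mulr_ge0.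
  rewrite h -(fineK f1) -(fineK f2) -EFinM; exact: ltry.
by rewrite /Rintegral h fineM.
Qed.

Lemma indep_zero0 (F : T -> R) : measurable_fun [set: Tx] F -> (forall t, 0 <= F t) ->
  Int F -> Int e -> \int[P]_t (e t) = 0 ->
  Int (fun t => F t * e t) /\ \int[P]_t (F t * e t) = 0.
Proof.
move=> mF F0 iF ie e0.
pose ep (s : R) := (`|s| + s) / 2.
pose en (s : R) := (`|s| - s) / 2.
have mep : measurable_fun setT ep.
  apply: measurable_funM; last exact: measurable_cst.
  by apply: measurable_funD => //; exact: normr_measurable.
have men : measurable_fun setT en.
  apply: measurable_funM; last exact: measurable_cst.
  by apply: measurable_funB => //; exact: normr_measurable.
have ep0 s : 0 <= ep s by rewrite /ep divr_ge0 // -lerBlDr sub0r ler_normr lexx orbT.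
have en0 s : 0 <= en s by rewrite /en divr_ge0 // subr_ge0 ler_norm.
have epe s : ep s - en s = s by rewrite /ep /en; field.
have iep : Int (fun t => ep (e t)).
  apply: (int_le _ _ (int_norm ie)); first exact: (measurableT_comp mep me).
  move=> t; rewrite ger0_norm // /ep; have := ler_norm (e t); lra.
have ien : Int (fun t => en (e t)).
  apply: (int_le _ _ (int_norm ie)); first exact: (measurableT_comp men me).
  move=> t; rewrite ger0_norm // /en; have := ler_norm (- e t); rewrite normrN; lra.
have [iFep hFep] := indep_ge0R mF mep F0 ep0 iF iep.
have [iFen hFen] := indep_ge0R mF men F0 en0 iF ien.
have eqF : (fun t => F t * e t) = (fun t => F t * ep (e t) - F t * en (e t)).
  by apply/funext => t; rewrite -mulrBr epe.
rewrite eqF; split; first exact: intB.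
rewrite RintegralB // hFep hFen -mulrBr -RintegralB //.
have -> : (fun t => ep (e t) - en (e t)) = e by apply/funext => t; exact: epe.
by rewrite e0 mulr0.
Qed.

Lemma indep_zero (F : T -> R) : measurable_fun [set: Tx] F ->
  Int F -> Int e -> \int[P]_t (e t) = 0 ->
  Int (fun t => F t * e t) /\ \int[P]_t (F t * e t) = 0.
Proof.
move=> mF iF ie e0.
pose Fp t := (`|F t| + F t) / 2.
pose Fn t := (`|F t| - F t) / 2.
have mFp : measurable_fun [set: Tx] Fp.
  apply: measurable_funM; last exact: measurable_cst.
  apply: measurable_funD => //; apply: (measurableT_comp _ mF); exact: normr_measurable.
have mFn : measurable_fun [set: Tx] Fn.
  apply: measurable_funM; last exact: measurable_cst.
  apply: measurable_funB => //; apply: (measurableT_comp _ mF); exact: normr_measurable.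
have Fp0 t : 0 <= Fp t by rewrite /Fp; have := ler_norm (- F t); rewrite normrN; lra.
have Fn0 t : 0 <= Fn t by rewrite /Fn; have := ler_norm (F t); lra.
have iFp : Int Fp.
  apply: (int_le _ _ (int_norm iF)); first exact: mTx.
  move=> t; rewrite ger0_norm // /Fp; have := ler_norm (F t); lra.
have iFn : Int Fn.
  apply: (int_le _ _ (int_norm iF)); first exact: mTx.
  move=> t; rewrite ger0_norm // /Fn; have := ler_norm (- F t); rewrite normrN; lra.
have [i1 h1] := indep_zero0 mFp Fp0 iFp ie e0.
have [i2 h2] := indep_zero0 mFn Fn0 iFn ie e0.
have eqF : (fun t => F t * e t) = (fun t => Fp t * e t - Fn t * e t).
  by apply/funext => t; rewrite -mulrBl /Fp /Fn; congr (_ * _); field.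
rewrite eqF; split; first exact: intB.
by rewrite RintegralB // h1 h2 subr0.
Qed.
End Indep2.

Section Main.
Context d (T : measurableType d) (R : realType) (P : probability T R) (n : nat)
  (X : T -> 'cV[R]_n) (e : T -> R) (H : 'M[R]_n) (sigma kappa : R).
Hypothesis mX : forall j, measurable_fun setT (fun t => X t j ord0).
Hypothesis me : measurable_fun setT e.
Hypothesis ind : indep_vec_rv P X e.
Hypothesis kpos : 0 < kappa.
Hypothesis HE : forall j k, ('E_P[fun t => (X t j ord0 * X t k ord0)%R])%E = (H j k)%:E.
Hypothesis E0 : ('E_P[e])%E = 0%E.
Hypothesis E2 : ('E_P[fun t => (e t ^+ 2)%R])%E = (sigma ^+ 2)%:E.
Hypothesis H4 : forall (z : 'cV[R]_n),
     (('E_P[fun t => (((z^T *m X t) ord0 ord0) ^+ 4)%R])%E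
       <= (kappa * ((z^T *m H *m z) ord0 ord0) ^+ 2)%:E)%E.
Local Notation Tx := (g_sigma_algebraType (rectG X)).
Local Notation Int f := (P.-integrable setT (EFin \o f)).

Definition Y (z : 'cV[R]_n) t := (z^T *m X t) ord0 ord0.

Lemma YE z t : Y z t = \sum_j z j ord0 * X t j ord0.
Proof. by rewrite /Y mxE; apply: eq_bigr => j _; rewrite mxE. Qed.

Lemma mY z : measurable_fun [set: Tx] (Y z).
Proof.
rewrite (_ : Y z = fun t => \sum_j z j ord0 * X t j ord0); last by apply/funext => t; exact: YE.
apply: measurable_sum => j; apply: measurable_funM; first exact: measurable_cst.
exact: mxj'.
Qed.

Lemma mYT z : measurable_fun setT (Y z).
Proof. exact: (mTx mX (mY z)). Qed.

Lemma iY4 z : Int (fun t => Y z t ^+ 4).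
Proof.
apply: int_ge0; first exact: measurable_funX (mYT z).
  by move=> t; rewrite (_ : 4 = 2 * 2)%N // exprM sqr_ge0.
have := H4 z; rewrite unlock => h; apply: (le_lt_trans h); exact: ltry.
Qed.

Lemma iY2 z : Int (fun t => Y z t ^+ 2).
Proof.
apply: (int_le _ _ (intD (int_cst P 1) (iY4 z))); first exact: measurable_funX (mYT z).
move=> t; rewrite ger0_norm ?sqr_ge0 //; set a := Y z t; nra.
Qed.

Lemma iYY z w : Int (fun t => Y z t ^+ 2 * Y w t ^+ 2).
Proof.
apply: (int_le _ _ (intD (iY4 z) (iY4 w))).
  by apply: measurable_funM; exact: measurable_funX (mYT _).
move=> t; set a := Y z t; set b := Y w t.
rewrite ger0_norm; last by rewrite mulr_ge0 // sqr_ge0.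
have := sqr_ge0 (a ^+ 2 - b ^+ 2); have := sqr_ge0 a; have := sqr_ge0 b; nra.
Qed.

Lemma iYprod z w : Int (fun t => Y z t * Y w t).
Proof.
apply: (int_le _ _ (intD (iY2 z) (iY2 w))).
  by apply: measurable_funM; exact: mYT.
move=> t; set a := Y z t; set b := Y w t; rewrite normrM.
have := sqr_ge0 (`|a| - `|b|); rewrite -[a ^+ 2]real_normK ?num_real // -[b ^+ 2]real_normK ?num_real //.
nra.
Qed.

Lemma ie2 : Int (fun t => e t ^+ 2).
Proof.
apply: int_ge0; first exact: measurable_funX.
  by move=> t; exact: sqr_ge0.
by move: E2; rewrite unlock => ->; exact: ltry.
Qed.

Lemma ie : Int e.
Proof.
apply: (int_le _ _ (intD (int_cst P 1) ie2)) => // t.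
set a := e t; have := sqr_ge0 (`|a| - 1); rewrite -[a ^+ 2]real_normK ?num_real //.
have := normr_ge0 a; nra.
Qed.

Lemma Ee0 : \int[P]_t e t = 0.
Proof. by rewrite /Rintegral; move: E0; rewrite unlock => ->. Qed.

Lemma Ee2 : \int[P]_t (e t ^+ 2) = sigma ^+ 2.
Proof. by rewrite /Rintegral; move: E2; rewrite unlock => ->. Qed.

Lemma EXX j k : \int[P]_t (X t j ord0 * X t k ord0) = H j k.
Proof. by rewrite /Rintegral; move: (HE j k); rewrite unlock => ->. Qed.

Lemma YX j t : Y (delta_mx j ord0) t = X t j ord0.
Proof.
rewrite YE (bigD1 j) //= mxE !eqxx mul1r big1 ?addr0 // => k kj.
by rewrite mxE (negbTE kj) mul0r.
Qed.

Lemma iXX j k : Int (fun t => X t j ord0 * X t k ord0).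
Proof.
have := iYprod (delta_mx j ord0) (delta_mx k ord0).
by under eq_fun do rewrite !YX.
Qed.

Lemma EY2 z : \int[P]_t (Y z t ^+ 2) = (z^T *m H *m z) ord0 ord0.
Proof.
rewrite qf.
transitivity (\sum_j \sum_k (z j ord0 * z k ord0) * \int[P]_t (X t j ord0 * X t k ord0)); last first.
  by apply: eq_bigr => j _; apply: eq_bigr => k _; rewrite EXX.
rewrite -(@RE_sum2 _ _ _ P n (fun j k t => X t j ord0 * X t k ord0) (fun j k => z j ord0 * z k ord0)); last by move=> j k; exact: iXX.
apply: eq_Rintegral => t _; rewrite YE expr2 big_distrl /=; apply: eq_bigr => j _.
rewrite big_distrr /=; apply: eq_bigr => k _; ring.
Qed.

Lemma iYe z : Int (fun t => Y z t ^+ 2 * e t ^+ 2) /\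
  \int[P]_t (Y z t ^+ 2 * e t ^+ 2) = (z^T *m H *m z) ord0 ord0 * sigma ^+ 2.
Proof.
have mF : measurable_fun [set: Tx] (fun t => Y z t ^+ 2) by exact: measurable_funX (mY z).
have mG : measurable_fun setT (fun s : R => s ^+ 2) by exact: exprn_measurable.
have [i h] := indep_ge0R mX me ind mF mG (fun t => sqr_ge0 _) (fun s => sqr_ge0 _) (iY2 z) ie2.
by split => //; rewrite h EY2 Ee2.
Qed.

Lemma cross z w : Int (fun t => Y z t ^+ 2 * Y w t * e t) /\
  \int[P]_t (Y z t ^+ 2 * Y w t * e t) = 0.
Proof.
have mF : measurable_fun [set: Tx] (fun t => Y z t ^+ 2 * Y w t).
  by apply: measurable_funM; [exact: measurable_funX (mY z)|exact: mY].
have iF : Int (fun t => Y z t ^+ 2 * Y w t).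
  apply: (int_le _ _ (intD (iY2 z) (iYY z w))); first exact: (mTx mX mF).
  move=> t; set a := Y z t; set b := Y w t; rewrite normrM ger0_norm ?sqr_ge0 //.
  have := sqr_ge0 (`|b| - 1); rewrite -[b ^+ 2]real_normK ?num_real //.
  have := normr_ge0 b; have := sqr_ge0 a; nra.
exact: (indep_zero mX me ind mF iF ie Ee0).
Qed.

Lemma EYY_le z w : \int[P]_t (Y z t ^+ 2 * Y w t ^+ 2) <=
  kappa * (z^T *m H *m z) ord0 ord0 * (w^T *m H *m w) ord0 ord0.
Proof.
set p : R := (z^T *m H *m z) ord0 ord0; set q : R := (w^T *m H *m w) ord0 ord0.
set c := \int[P]_t (Y z t ^+ 2 * Y w t ^+ 2).
have p0 : 0 <= p by rewrite /p -EY2; apply: Rintegral_ge0 => t _; exact: sqr_ge0.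
have q0 : 0 <= q by rewrite /q -EY2; apply: Rintegral_ge0 => t _; exact: sqr_ge0.
have Ez : \int[P]_t (Y z t ^+ 4) <= kappa * p ^+ 2.
  by rewrite -lee_fin /Rintegral fineK ?(integrable_fin_num measurableT (iY4 z)) //; have := H4 z; rewrite unlock.
have Ew : \int[P]_t (Y w t ^+ 4) <= kappa * q ^+ 2.
  by rewrite -lee_fin /Rintegral fineK ?(integrable_fin_num measurableT (iY4 w)) //; have := H4 w; rewrite unlock.
have key (l : R) : 0 < l -> 2 * c <= l * \int[P]_t (Y z t ^+ 4) + l^-1 * \int[P]_t (Y w t ^+ 4).
  move=> l0.
  rewrite -!RintegralZl //; try exact: iY4; try exact: iYY.
  rewrite -RintegralD //; [|exact: intZ (iY4 z)|exact: intZ (iY4 w)].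
  apply: le_Rintegral => //; [exact: intZ (iYY z w)| apply: intD; exact: intZ (iY4 _)|].
  move=> t _; set a := Y z t; set b := Y w t.
  rewrite (_ : a ^+ 4 = (a ^+ 2) ^+ 2); last by rewrite -exprM.
  rewrite (_ : b ^+ 4 = (b ^+ 2) ^+ 2); last by rewrite -exprM.
  move: (sqr_ge0 a) (sqr_ge0 b); set A := a ^+ 2; set B := b ^+ 2 => A0 B0.
  have := sqr_ge0 (l * A - B); have li : l * l^-1 = 1 by rewrite mulfV // gt_eqF.
  have li0 : 0 < l^-1 by rewrite invr_gt0.
  nra.
have bnd (eps : R) : 0 < eps -> c <= kappa * p * q + eps * (kappa * (p + q)).
  move=> e0; pose l := (q + eps) / (p + eps).
  have pe : 0 < p + eps by rewrite ltr_wpDl.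
  have qe : 0 < q + eps by rewrite ltr_wpDl.
  have l0 : 0 < l by rewrite divr_gt0.
  have li : l^-1 = (p + eps) / (q + eps) by rewrite invf_div.
  have := key l l0.
  have h1 := ler_wpM2l (ltW l0) Ez.
  have h2 : l^-1 * \int[P]_t (Y w t ^+ 4) <= l^-1 * (kappa * q ^+ 2).
    by apply: ler_wpM2l => //; rewrite invr_ge0 ltW.
  have h3 : l * p ^+ 2 <= (q + eps) * p.
    have r : p / (p + eps) <= 1 by rewrite ler_pdivrMr // mul1r lerDl ltW.
    rewrite (_ : l * p ^+ 2 = ((q + eps) * p) * (p / (p + eps))); last by rewrite /l; field; rewrite gt_eqF.
    by rewrite -[leRHS]mulr1 ler_wpM2l // mulr_ge0 // addr_ge0 // ltW.
  have h4 : l^-1 * q ^+ 2 <= (p + eps) * q.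
    have r : q / (q + eps) <= 1 by rewrite ler_pdivrMr // mul1r lerDl ltW.
    rewrite (_ : l^-1 * q ^+ 2 = ((p + eps) * q) * (q / (q + eps))); last by rewrite li; field; rewrite gt_eqF.
    by rewrite -[leRHS]mulr1 ler_wpM2l // mulr_ge0 // addr_ge0 // ltW.
  have h5 : l * (kappa * p ^+ 2) <= kappa * ((q + eps) * p) by rewrite mulrCA ler_wpM2l // ltW.
  have h6 : l^-1 * (kappa * q ^+ 2) <= kappa * ((p + eps) * q) by rewrite mulrCA ler_wpM2l // ltW.
  move=> hk; have := le_trans (le_trans hk (lerD h1 h2)) (lerD h5 h6); move=> h; clearbody p q c.
  have e1 : kappa * ((q + eps) * p) + kappa * ((p + eps) * q) = 2 * (kappa * p * q) + eps * (kappa * (p + q)) by ring.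
  rewrite e1 in h; move: h; set K := kappa * p * q; set E := eps * (kappa * (p + q)); move=> h.
  have : 0 <= E by apply: mulr_ge0; [exact: ltW | apply: mulr_ge0; [exact: ltW | exact: addr_ge0]].
  lra.
apply/ler_addgt0Pr => eps e0.
have kpq : 0 < kappa * (p + q) + 1 by rewrite ltr_wpDl // mulr_ge0 ?addr_ge0 // ltW.
apply: (le_trans (bnd (eps / (kappa * (p + q) + 1)) _)); first by rewrite divr_gt0.
have M0 : 0 <= kappa * (p + q) by rewrite mulr_ge0 ?addr_ge0 // ltW.
rewrite lerD2l -[leRHS]mulr1 mulrAC -mulrA ler_wpM2l ?ltW //.
by rewrite ltr_pdivrMr // mul1r ltrDl ltr01.
Qed.

Definition G (v : 'cV[R]_n) t : 'cV[R]_n := (X t *m (X t)^T) *m v + e t *: X t.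
Definition g (v : 'cV[R]_n) (j : 'I_n) t := X t j ord0 * (Y v t + e t).

Lemma GE v t j : G v t j ord0 = g v j t.
Proof.
rewrite /G /g mxE YE mulrDr mulr_sumr; congr (_ + _); last by rewrite !mxE mulrC.
rewrite mxE; apply: eq_bigr => l _; rewrite mxE big_ord1 !mxE; ring.
Qed.

Lemma GGE v t j k : (G v t *m (G v t)^T) j k = g v j t * g v k t.
Proof. by rewrite mxE big_ord1 [(G v t)^T _ _]mxE !GE. Qed.

Lemma ThetaE v j k : Emx P (fun t => G v t *m (G v t)^T) j k = \int[P]_t (g v j t * g v k t).
Proof.
rewrite /Emx mxE unlock /Rintegral; congr fine; apply: eq_integral => t _.
by rewrite GGE.
Qed.

Lemma iGG v j k : Int (fun t => g v j t * g v k t).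
Proof.
pose a t := Y (delta_mx j ord0) t; pose b t := Y (delta_mx k ord0) t.
have dom := intD (intD (iYY (delta_mx j ord0) v) (iYe (delta_mx j ord0)).1)
                 (intD (iYY (delta_mx k ord0) v) (iYe (delta_mx k ord0)).1).
apply: (int_le _ _ dom).
  apply: measurable_funM; apply: measurable_funM => //; apply: measurable_funD => //; exact: mYT.
move=> t /=; rewrite /g -!(YX _ t); set A := Y v t; set E := e t.
set a' := Y (delta_mx j ord0) t; set b' := Y (delta_mx k ord0) t.
have h1 : `|a'| * `|b'| <= (a' ^+ 2 + b' ^+ 2) / 2.
  have := sqr_ge0 (`|a'| - `|b'|); rewrite -[a' ^+ 2]real_normK ?num_real // -[b' ^+ 2]real_normK ?num_real //.
  lra.
have h2 : (A + E) ^+ 2 <= 2 * (A ^+ 2 + E ^+ 2) by have := sqr_ge0 (A - E); lra.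
rewrite (_ : `|a' * (A + E) * (b' * (A + E))| = (`|a'| * `|b'|) * (A + E) ^+ 2); last first.
  by rewrite !normrM -[(A + E) ^+ 2]real_normK ?num_real //; ring.
apply: (le_trans (ler_pM (mulr_ge0 (normr_ge0 _) (normr_ge0 _)) (sqr_ge0 _) h1 h2)).
rewrite le_eqVlt; apply/orP; left; apply/eqP.
rewrite -mulrA (mulrA 2^-1) mulVf ?pnatr_eq0 // mul1r; ring.
Qed.

Definition Th (v : 'cV[R]_n) := Emx P (fun t => G v t *m (G v t)^T).

Lemma Th_sym v : (Th v)^T = Th v.
Proof.
apply/matrixP => j k; rewrite mxE /Th !ThetaE.
by apply: eq_Rintegral => t _; rewrite mulrC.
Qed.

Lemma claim1 v z : (z^T *m Th v *m z) ord0 ord0 =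
  \int[P]_t (Y z t ^+ 2 * (Y v t + e t) ^+ 2).
Proof.
rewrite qf.
transitivity (\sum_j \sum_k (z j ord0 * z k ord0) * \int[P]_t (g v j t * g v k t)).
  by apply: eq_bigr => j _; apply: eq_bigr => k _; rewrite /Th ThetaE.
rewrite -(@RE_sum2 _ _ _ P n (fun j k t => g v j t * g v k t) (fun j k => z j ord0 * z k ord0)); last by move=> j k; exact: iGG.
apply: eq_Rintegral => t _; rewrite YE /g expr2 big_distrl big_distrl /=; apply: eq_bigr => j _.
rewrite big_distrr big_distrl /=; apply: eq_bigr => k _; ring.
Qed.

Lemma claim2 v z : \int[P]_t (Y z t ^+ 2 * (Y v t + e t) ^+ 2) =
  \int[P]_t (Y z t ^+ 2 * Y v t ^+ 2) + (z^T *m H *m z) ord0 ord0 * sigma ^+ 2.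
Proof.
have [ic hc] := cross z v.
have [ie' he] := iYe z.
have -> : (fun t => Y z t ^+ 2 * (Y v t + e t) ^+ 2) =
   (fun t => (Y z t ^+ 2 * Y v t ^+ 2 + 2 * (Y z t ^+ 2 * Y v t * e t)) + Y z t ^+ 2 * e t ^+ 2).
  by apply/funext => t; ring.
rewrite RintegralD //; last by apply: intD; [exact: iYY|exact: intZ].
rewrite RintegralD //; [|exact: iYY|exact: intZ].
by rewrite RintegralZl // hc mulr0 addr0 he.
Qed.

Lemma theta_le (v z : 'cV[R]_n) : (z^T *m Th v *m z) ord0 ord0 <=
  kappa * (z^T *m H *m z) ord0 ord0 * (v^T *m H *m v) ord0 ord0 + (z^T *m H *m z) ord0 ord0 * sigma ^+ 2.
Proof. by rewrite claim1 claim2 lerD2r EYY_le. Qed.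

Lemma H_sym : H^T = H.
Proof.
apply/matrixP => j k; rewrite mxE.
have := HE k j.
rewrite (_ : (fun t => X t k ord0 * X t j ord0) = (fun t => X t j ord0 * X t k ord0)); last by apply/funext => t; rewrite mulrC.
by rewrite HE => -[].
Qed.
End Main.

Lemma trHv (R : realType) (n : nat) (H : 'M[R]_n) (v : 'cV[R]_n) :
  \tr (H *m (v *m v^T)) = (v^T *m H *m v) ord0 ord0.
Proof. by rewrite mulmxA mxtrace_mulC /mxtrace big_ord1 mulmxA. Qed.

Lemma trCov (R : realType) (N n : nat) (H : 'M[R]_n) (ws : 'I_N -> 'cV[R]_n) :
  \tr (H *m CovW ws) = N%:R^-1 * \sum_i ((wmean ws - ws i)^T *m H *m (wmean ws - ws i)) ord0 ord0.
Proof.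
rewrite /CovW -scalemxAr mxtraceZ mulmx_sumr raddf_sum /=; congr (_ * _).
by apply: eq_bigr => i _; rewrite trHv.
Qed.
Unset Implicit Arguments.
Theorem proposition5 (dT : measure_display) (T : measurableType dT)
  (R : realType) (P : probability T R) (N d : nat)
  (x : 'I_N -> T -> 'cV[R]_d) (eps : 'I_N -> T -> R)
  (H : 'M[R]_d) (ws : 'I_N -> 'cV[R]_d) (sigma kappa : R) :
  (0 < N)%N ->
  (forall i j, measurable_fun setT (fun t => x i t j ord0)) ->
  (forall i, measurable_fun setT (eps i)) ->
  (forall i j k, ('E_P[fun t => (x i t j ord0 * x i t k ord0)%R])%E = (H j k)%:E) ->
  (forall i, indep_vec_rv P (x i) (eps i)) ->
  (forall i, ('E_P[eps i])%E = 0%E) ->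
  (forall i, ('E_P[fun t => (eps i t ^+ 2)%R])%E = (sigma ^+ 2)%:E) ->
  0 < kappa ->
  (forall i (z : 'cV[R]_d),
     ('E_P[fun t => (((z^T *m x i t) ord0 ord0) ^+ 4)%R])%E
       <= (kappa * ((z^T *m H *m z) ord0 ord0) ^+ 2)%:E)%E ->
  loewner_le (N%:R^-1 *: \sum_(i < N) Theta P ws x eps i)
             ((kappa * \tr (H *m CovW ws) + sigma ^+ 2) *: H).
Proof.
move=> N0 mx meps HEi indi E0i E2i kpos H4i.
pose v i := wmean ws - ws i.
have ThE i : Theta P ws x eps i = Th P (x i) (eps i) (v i) by [].
have Hs : H^T = H by exact: (H_sym (HEi (Ordinal N0))).
split.
  apply/matrixP => j k.
  have Hjk : H k j = H j k by have := congr1 (fun M : 'M[R]_d => M j k) Hs; rewrite mxE.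
  have Tjk i : Theta P ws x eps i k j = Theta P ws x eps i j k.
    by have := congr1 (fun M : 'M[R]_d => M j k) (Th_sym P (x i) (eps i) (v i)); rewrite mxE.
  rewrite !mxE !summxE Hjk; congr (_ - _ * _); apply: eq_bigr => i _; exact: Tjk.
move=> z; have o : (0 : 'I_1) = ord0 by []; rewrite !o.
rewrite trCov mulmxBr mulmxBl -!scalemxAr -!scalemxAl mulmx_sumr mulmx_suml.
rewrite [X in 0 <= X]mxE [(_ *: (z^T *m H *m z)) _ _]mxE [X in _ + X]mxE [X in _ - X]mxE summxE.

set p := (z^T *m H *m z) ord0 ord0.
pose q i := ((v i)^T *m H *m v i) ord0 ord0.
have hb i : (z^T *m Theta P ws x eps i *m z) ord0 ord0 <= kappa * p * q i + p * sigma ^+ 2.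
  exact: (theta_le (mx i) (meps i) (indi i) kpos (HEi i) (E0i i) (E2i i) (H4i i) (v i) z).
have S : \sum_i (z^T *m Theta P ws x eps i *m z) ord0 ord0 <= \sum_(i < N) (kappa * p * q i + p * sigma ^+ 2).
  by apply: ler_sum => i _; exact: hb.
rewrite big_split /= -mulr_sumr sumr_const card_ord -mulr_natl in S.
rewrite (_ : \sum_i ((wmean ws - ws i)^T *m H *m (wmean ws - ws i)) ord0 ord0 = \sum_i q i) //.
move: S; set Q := \sum_i q i; set Ts := \sum_(i < N) _; move=> S.
have Ni : 0 < N%:R^-1 :> R by rewrite invr_gt0 ltr0n.
have h := ler_wpM2l (ltW Ni) S.
have Nn : N%:R != 0 :> R by rewrite pnatr_eq0 -lt0n.
have e1 : N%:R^-1 * (kappa * p * Q + N%:R * (p * sigma ^+ 2)) = (kappa * (N%:R^-1 * Q) + sigma ^+ 2) * p.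
  by rewrite mulrDr [X in _ + X]mulrA mulVf // mul1r; ring.
by rewrite subr_ge0 -e1.
Qed.
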